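(* Let $T>0$, $\lambda_1,\lambda_2>0$, $p_{12},p_{21}\in[0,1]$, $r_1,r_2,h_1,h_2\ge0$ and $c_1,c_2\in\mathbb{R}$. For nonnegative integers $Q_1,Q_2$ define $$\pi^{(1)}(Q_1,Q_2)=\frac1T\Big[(r_1-c_1)Q_1+(r_2-c_2)Q_2-(r_1+h_1)E_{Q_1,Q_2}[n_1(T)]-(r_2+h_2)E_{Q_1,Q_2}[n_2(T)]\Big],$$ where $E_{Q_1,Q_2}$ denotes expectation for the inventory CTMC started at $(Q_1,Q_2)$. Then $\pi^{(1)}$ is submodular, i.e. for all integers $Q_1,Q_2\ge0$, $$\pi^{(1)}(Q_1+1,Q_2+1)-\pi^{(1)}(Q_1+1,Q_2)-\pi^{(1)}(Q_1,Q_2+1)+\pi^{(1)}(Q_1,Q_2)\le 0.$$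
   Context: Two products; customers wanting product $i$ arrive as independent Poisson processes of rate $\lambda_i$; a customer who wants product $i$ and finds it out of stock while product $j\ne i$ is in stock buys one unit of $j$ with probability $p_{ij}$ (otherwise the sale is lost). The inventory CTMC $\{(n_1(t),n_2(t))\}$ started at $(Q_1,Q_2)$ (no replenishment) has state space $\{0,\dots,Q_1\}\times\{0,\dots,Q_2\}$ and transition rates: from $(i_1,i_2)$ with $i_1,i_2\ge1$, to $(i_1-1,i_2)$ at rate $\lambda_1$ and to $(i_1,i_2-1)$ at rate $\lambda_2$; from $(i_1,0)$ with $i_1\ge 1$, to $(i_1-1,0)$ at rate $s_1=\lambda_1+\lambda_2p_{21}$; from $(0,i_2)$ with $i_2\ge1$, to $(0,i_2-1)$ at rate $s_2=\lambda_2+\lambda_1p_{12}$; $(0,0)$ is absorbing. $r_i,c_i,h_i$ are the retail price, unit purchase cost, and end-of-period holding cost of product $i$. *)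

(* Defs.v *)
From Stdlib Require Import Reals Lra Lia Arith ClassicalEpsilon Bool.
Open Scope R_scope.
Open Scope bool_scope.

(* A state of the inventory CTMC: (n1, n2). *)
Definition state := (nat * nat)%type.

(* The limit of a real sequence (chosen classically; meaningful when it converges). *)
Definition seq_lim (u : nat -> R) : R :=
  epsilon (inhabits 0%R) (fun l => Un_cv u l).

Definition box_sum (Q1 Q2 : nat) (f : state -> R) : R :=
  sum_f_R0 (fun a => sum_f_R0 (fun b => f (a, b)) Q2) Q1.

Definition out_rate (l1 l2 p12 p21 : R) (x : state) : R :=
  match x with
  | (S _, S _) => l1 + l2
  | (S _, O) => l1 + l2 * p21
  | (O, S _) => l2 + l1 * p12
  | (O, O) => 0
  end.

Definition gen (l1 l2 p12 p21 : R) (x y : state) : R :=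
  let '(a, b) := x in
  let '(c, d) := y in
  if Nat.eqb a c && Nat.eqb b d then - out_rate l1 l2 p12 p21 x
  else if Nat.eqb (S c) a && Nat.eqb b d then
    (if Nat.eqb b 0 then l1 + l2 * p21 else l1)
  else if Nat.eqb a c && Nat.eqb (S d) b then
    (if Nat.eqb a 0 then l2 + l1 * p12 else l2)
  else 0.

(* k-th power of the generator restricted to the state space
   {0..Q1} x {0..Q2} (which is closed under transitions). *)
Fixpoint gen_pow (l1 l2 p12 p21 : R) (Q1 Q2 : nat) (k : nat) (x y : state) : R :=
  match k with
  | O => if Nat.eqb (fst x) (fst y) && Nat.eqb (snd x) (snd y) then 1 else 0
  | S k' => box_sum Q1 Q2 (fun z => gen_pow l1 l2 p12 p21 Q1 Q2 k' x z *
                                      gen l1 l2 p12 p21 z y)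
  end.

Definition trans_prob (l1 l2 p12 p21 : R) (Q1 Q2 : nat) (t : R) (x y : state) : R :=
  seq_lim (fun n => sum_f_R0 (fun k => t ^ k / INR (fact k) *
                                        gen_pow l1 l2 p12 p21 Q1 Q2 k x y) n).

Definition E_n1 (l1 l2 p12 p21 : R) (Q1 Q2 : nat) (T : R) : R :=
  box_sum Q1 Q2 (fun y => trans_prob l1 l2 p12 p21 Q1 Q2 T (Q1, Q2) y * INR (fst y)).

Definition E_n2 (l1 l2 p12 p21 : R) (Q1 Q2 : nat) (T : R) : R :=
  box_sum Q1 Q2 (fun y => trans_prob l1 l2 p12 p21 Q1 Q2 T (Q1, Q2) y * INR (snd y)).

Definition pi1 (T l1 l2 p12 p21 r1 r2 c1 c2 h1 h2 : R) (Q1 Q2 : nat) : R :=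
  / T * ((r1 - c1) * INR Q1 + (r2 - c2) * INR Q2
         - (r1 + h1) * E_n1 l1 l2 p12 p21 Q1 Q2 T
         - (r2 + h2) * E_n2 l1 l2 p12 p21 Q1 Q2 T).

(* Main.v *)
Require Import Defs.
From Stdlib Require Import Reals Lra Lia Arith ClassicalEpsilon.
From Coquelicot Require Import Coquelicot.
Open Scope R_scope.

Lemma sum_single (F : nat -> R) (i Q : nat) :
  (i <= Q)%nat -> (forall k, (k <= Q)%nat -> k <> i -> F k = 0) ->
  sum_f_R0 F Q = F i.
Proof.
  induction Q as [|Q IH]; intros Hi H.
  - replace i with 0%nat by lia. reflexivity.
  - simpl. destruct (Nat.eq_dec i (S Q)) as [->|Hne].
    + rewrite (sum_eq _ (fun _ => 0)).
      * rewrite sum_cte. ring.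
      * intros k Hk. apply H; lia.
    + rewrite IH by (try lia; intros k Hk Hk'; apply H; lia).
      rewrite (H (S Q)) by lia. ring.
Qed.

Lemma sum_two (F : nat -> R) (i j Q : nat) :
  (i < j)%nat -> (j <= Q)%nat ->
  (forall k, (k <= Q)%nat -> k <> i -> k <> j -> F k = 0) ->
  sum_f_R0 F Q = F i + F j.
Proof.
  induction Q as [|Q IH]; intros Hij Hj H.
  - lia.
  - simpl. destruct (Nat.eq_dec j (S Q)) as [->|Hne].
    + rewrite (sum_single F i) by (try lia; intros k Hk Hk'; apply H; lia).
      reflexivity.
    + rewrite IH by (try lia; intros k Hk Hk' Hk''; apply H; lia).
      rewrite (H (S Q)) by lia. ring.
Qed.

Lemma sum_exch (F : nat -> nat -> R) n m :
  sum_f_R0 (fun i => sum_f_R0 (fun j => F i j) m) n =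
  sum_f_R0 (fun j => sum_f_R0 (fun i => F i j) n) m.
Proof.
  induction n as [|n IH]; simpl.
  - reflexivity.
  - rewrite IH. rewrite <- sum_plus. reflexivity.
Qed.

Lemma sum_scal_l (F : nat -> R) c n :
  sum_f_R0 (fun i => c * F i) n = c * sum_f_R0 F n.
Proof.
  induction n as [|n IH]; simpl; [ring|rewrite IH; ring].
Qed.

Lemma sum_abs_bound (F : nat -> R) C n :
  (forall i, (i <= n)%nat -> Rabs (F i) <= C) ->
  Rabs (sum_f_R0 F n) <= INR (S n) * C.
Proof.
  induction n as [|n IH]; intros H.
  - specialize (H 0%nat (le_n _)). simpl. lra.
  - change (sum_f_R0 F (S n)) with (sum_f_R0 F n + F (S n)).
    eapply Rle_trans; [apply Rabs_triang|].
    rewrite (S_INR (S n)).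
    assert (h1 := IH (fun i Hi => H i (le_S _ _ Hi))).
    assert (h2 := H (S n) (le_n _)). lra.
Qed.

Lemma box_sum_ext Q1 Q2 f g :
  (forall a b, (a <= Q1)%nat -> (b <= Q2)%nat -> f (a,b) = g (a,b)) ->
  box_sum Q1 Q2 f = box_sum Q1 Q2 g.
Proof.
  intros H. unfold box_sum. apply sum_eq. intros a Ha. apply sum_eq.
  intros b Hb. apply H; auto.
Qed.

Lemma box_sum_scal Q1 Q2 f c :
  box_sum Q1 Q2 (fun y => c * f y) = c * box_sum Q1 Q2 f.
Proof.
  unfold box_sum. rewrite <- sum_scal_l. apply sum_eq. intros. apply sum_scal_l.
Qed.

Lemma box_sum_exch Q1 Q2 (F : state -> state -> R) :
  box_sum Q1 Q2 (fun y => box_sum Q1 Q2 (fun z => F z y)) =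
  box_sum Q1 Q2 (fun z => box_sum Q1 Q2 (fun y => F z y)).
Proof.
  unfold box_sum.
  transitivity (sum_f_R0 (fun c => sum_f_R0 (fun a => sum_f_R0 (fun d =>
       sum_f_R0 (fun b => F (a, b) (c, d)) Q2) Q2) Q1) Q1).
  - apply sum_eq; intros c _. apply (sum_exch (fun d a => sum_f_R0 (fun b => F (a, b) (c, d)) Q2)).
  - rewrite (sum_exch (fun c a => sum_f_R0 (fun d => sum_f_R0 (fun b => F (a, b) (c, d)) Q2) Q2)).
    apply sum_eq; intros a _.
    transitivity (sum_f_R0 (fun c => sum_f_R0 (fun b => sum_f_R0 (fun d => F (a, b) (c, d)) Q2) Q2) Q1).
    + apply sum_eq; intros c _. apply (sum_exch (fun d b => F (a, b) (c, d))).
    + apply (sum_exch (fun c b => sum_f_R0 (fun d => F (a, b) (c, d)) Q2)).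
Qed.

Lemma box_abs_bound Q1 Q2 f C :
  (forall a b, (a <= Q1)%nat -> (b <= Q2)%nat -> Rabs (f (a,b)) <= C) ->
  Rabs (box_sum Q1 Q2 f) <= INR (S Q1) * (INR (S Q2) * C).
Proof.
  intros H. unfold box_sum. apply sum_abs_bound. intros a Ha.
  apply sum_abs_bound. intros b Hb. auto.
Qed.

Definition Gop (l1 l2 p12 p21 : R) (v : state -> R) (x : state) : R :=
  match x with
  | (S a, S b) => l1 * (v (a, S b) - v (S a, S b)) + l2 * (v (S a, b) - v (S a, S b))
  | (S a, O) => (l1 + l2 * p21) * (v (a, O) - v (S a, O))
  | (O, S b) => (l2 + l1 * p12) * (v (O, b) - v (O, S b))
  | (O, O) => 0
  end.

Lemma gen_eval l1 l2 p12 p21 a b c d :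
  gen l1 l2 p12 p21 (a,b) (c,d) =
  if Nat.eqb a c && Nat.eqb b d then - out_rate l1 l2 p12 p21 (a,b)
  else if Nat.eqb (S c) a && Nat.eqb b d then
    (if Nat.eqb b 0 then l1 + l2 * p21 else l1)
  else if Nat.eqb a c && Nat.eqb (S d) b then
    (if Nat.eqb a 0 then l2 + l1 * p12 else l2)
  else 0.
Proof. reflexivity. Qed.

Lemma sum_zero (F : nat -> R) Q : (forall k, (k <= Q)%nat -> F k = 0) -> sum_f_R0 F Q = 0.
Proof.
  intros H. rewrite (sum_eq _ (fun _ => 0)) by auto. rewrite sum_cte. ring.
Qed.

Ltac geneq :=
  repeat rewrite gen_eval;
  repeat match goal with
  | |- context [Nat.eqb ?x ?y] => destruct (Nat.eqb_spec x y); try (exfalso; lia)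
  end; cbn [andb out_rate Gop]; try ring.

Lemma gen_row l1 l2 p12 p21 Q1 Q2 v a b :
  (a <= Q1)%nat -> (b <= Q2)%nat ->
  box_sum Q1 Q2 (fun y => gen l1 l2 p12 p21 (a,b) y * v y) = Gop l1 l2 p12 p21 v (a,b).
Proof.
  intros Ha Hb. unfold box_sum.
  destruct a as [|a]; destruct b as [|b].
  - rewrite (sum_single _ 0) by (try lia; intros k Hk Hk'; apply sum_zero; intros d Hd; geneq).
    cbv beta.
    rewrite (sum_single _ 0) by (try lia; intros k Hk Hk'; geneq).
    geneq.
  - rewrite (sum_single _ 0) by (try lia; intros k Hk Hk'; apply sum_zero; intros d Hd; geneq).
    cbv beta.
    rewrite (sum_two _ b (S b)) by (try lia; intros k Hk Hk' Hk''; geneq).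
    geneq.
  - rewrite (sum_two _ a (S a)) by (try lia; intros k Hk Hk' Hk''; apply sum_zero; intros d Hd; geneq).
    cbv beta.
    rewrite (sum_single _ 0) by (try lia; intros k Hk Hk'; geneq).
    rewrite (sum_single _ 0) by (try lia; intros k Hk Hk'; geneq).
    geneq.
  - rewrite (sum_two _ a (S a)) by (try lia; intros k Hk Hk' Hk''; apply sum_zero; intros d Hd; geneq).
    cbv beta.
    rewrite (sum_single _ (S b)) by (try lia; intros k Hk Hk'; geneq).
    rewrite (sum_two _ b (S b)) by (try lia; intros k Hk Hk' Hk''; geneq).
    geneq.
Qed.

Fixpoint itG (l1 l2 p12 p21 : R) (k : nat) (v : state -> R) : state -> R :=
  match k with O => v | S k => itG l1 l2 p12 p21 k (Gop l1 l2 p12 p21 v) end.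

Lemma box_sum_scal_r Q1 Q2 f c :
  box_sum Q1 Q2 f * c = box_sum Q1 Q2 (fun y => f y * c).
Proof.
  rewrite Rmult_comm, <- box_sum_scal. apply box_sum_ext. intros; ring.
Qed.

Lemma gp_itG l1 l2 p12 p21 Q1 Q2 k : forall v a b,
  (a <= Q1)%nat -> (b <= Q2)%nat ->
  box_sum Q1 Q2 (fun y => gen_pow l1 l2 p12 p21 Q1 Q2 k (a,b) y * v y) =
  itG l1 l2 p12 p21 k v (a,b).
Proof.
  induction k as [|k IH]; intros v a b Ha Hb.
  - unfold box_sum. cbn [gen_pow fst snd itG].
    rewrite (sum_single _ a) by (try lia; intros c Hc Hc'; apply sum_zero; intros d Hd;
       destruct (Nat.eqb_spec a c); try lia; simpl; ring).
    cbv beta.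
    rewrite (sum_single _ b) by (try lia; intros d Hd Hd';
       destruct (Nat.eqb_spec b d); try lia; rewrite Nat.eqb_refl; simpl; ring).
    rewrite !Nat.eqb_refl. simpl. ring.
  - cbn [gen_pow itG].
    rewrite <- (IH _ a b Ha Hb).
    transitivity (box_sum Q1 Q2 (fun y => box_sum Q1 Q2 (fun z =>
       gen_pow l1 l2 p12 p21 Q1 Q2 k (a, b) z * (gen l1 l2 p12 p21 z y * v y)))).
    + apply box_sum_ext; intros c d _ _. rewrite box_sum_scal_r.
      apply box_sum_ext; intros; ring.
    + rewrite box_sum_exch. apply box_sum_ext; intros c d Hc Hd.
      rewrite box_sum_scal. f_equal. apply gen_row; auto.
Qed.

Lemma gen_bound l1 l2 p12 p21 x y :
  0 < l1 -> 0 < l2 -> 0 <= p12 <= 1 -> 0 <= p21 <= 1 ->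
  Rabs (gen l1 l2 p12 p21 x y) <= l1 + l2.
Proof.
  intros h1 h2 h3 h4. destruct x as [a b], y as [c d].
  assert (0 <= l2 * p21 <= l2) by nra. assert (0 <= l1 * p12 <= l1) by nra.
  rewrite gen_eval.
  repeat match goal with
  | |- context [Nat.eqb ?x ?y] => destruct (Nat.eqb_spec x y)
  end; cbn [andb];
  try (destruct a, b; cbn [out_rate]);
  try (rewrite Rabs_Ropp); try (rewrite Rabs_R0); try (rewrite Rabs_right by lra); lra.
Qed.

Lemma gp_bound l1 l2 p12 p21 Q1 Q2 k x y :
  0 < l1 -> 0 < l2 -> 0 <= p12 <= 1 -> 0 <= p21 <= 1 ->
  Rabs (gen_pow l1 l2 p12 p21 Q1 Q2 k x y) <= (INR (S Q1) * (INR (S Q2) * (l1 + l2))) ^ k.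
Proof.
  intros h1 h2 h3 h4. revert y. induction k as [|k IH]; intros y.
  - simpl. destruct (_ && _); [rewrite Rabs_R1|rewrite Rabs_R0]; lra.
  - cbn [gen_pow]. set (B := INR (S Q1) * (INR (S Q2) * (l1 + l2))).
    assert (HB : 0 <= B).
    { unfold B. apply Rmult_le_pos; [apply pos_INR|]. apply Rmult_le_pos; [apply pos_INR|lra]. }
    eapply Rle_trans.
    { apply (box_abs_bound _ _ _ (B ^ k * (l1 + l2))). intros a b _ _.
      rewrite Rabs_mult. apply Rmult_le_compat; try apply Rabs_pos; auto.
      apply gen_bound; auto. }
    change (B ^ (S k)) with (B * B ^ k). right. unfold B at 2. ring.
Qed.

Definition Kop (al be p12 p21 : R) (v : state -> R) (x : state) : R :=
  match x with
  | (S a, S b) => al * v (a, S b) + be * v (S a, b)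
  | (S a, O) => (al + be * p21) * v (a, O) + (be - be * p21) * v (S a, O)
  | (O, S b) => (be + al * p12) * v (O, b) + (al - al * p12) * v (O, S b)
  | (O, O) => v (O, O)
  end.

Lemma Kop_ext al be p12 p21 v w x :
  (forall y, v y = w y) -> Kop al be p12 p21 v x = Kop al be p12 p21 w x.
Proof. intros H. destruct x as [[|a] [|b]]; simpl; rewrite !H; reflexivity. Qed.

Definition Dd (u : state -> R) a b := u (S a, b) - u (a, b).

Definition Inv (u : state -> R) : Prop :=
  (forall b, u (O, b) = 0) /\ (forall a b, 0 <= Dd u a b) /\
  (forall a b, Dd u a b <= Dd u a (S b)) /\ (forall a, Dd u a O <= Dd u (S a) O).

Definition Bd (u : state -> R) : Prop :=
  forall a b, 0 <= u (a, b) <= INR a + INR b.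

Section K.
Variables al be p12 p21 : R.
Hypotheses (hal : 0 <= al) (hbe : 0 <= be) (hab : al + be = 1)
  (hp12 : 0 <= p12 <= 1) (hp21 : 0 <= p21 <= 1).

Lemma Inv_K u : Inv u -> Inv (Kop al be p12 p21 u).
Proof.
  intros [I0 [I1 [I2 I3]]].
  assert (e1 : 0 <= be * (1 - p21)) by nra.
  assert (e2 : 0 <= be * p21) by nra.
  unfold Inv, Dd in *. split; [|split; [|split]].
  - intros [|b]; simpl; rewrite ?I0; ring.
  - intros [|a] [|b]; simpl; rewrite ?I0.
    + pose proof (I1 0%nat 0%nat). rewrite I0 in *. nra.
    + pose proof (I1 0%nat b). rewrite I0 in *. nra.
    + pose proof (I1 a 0%nat). pose proof (I1 (S a) 0%nat). nra.
    + pose proof (I1 a (S b)). pose proof (I1 (S a) b). nra.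
  - intros [|a] [|b]; simpl; rewrite ?I0.
    + pose proof (I1 0%nat 0%nat). rewrite I0 in *. nra.
    + pose proof (I2 0%nat b). rewrite !I0 in *. nra.
    + pose proof (I2 a 0%nat). pose proof (I3 a). nra.
    + pose proof (I2 a (S b)). pose proof (I2 (S a) b). nra.
  - intros [|a]; simpl; rewrite ?I0.
    + pose proof (I1 0%nat 0%nat). pose proof (I3 0%nat). rewrite I0 in *. nra.
    + pose proof (I3 a). pose proof (I3 (S a)). nra.
Qed.

Lemma Bd_K u : Bd u -> Bd (Kop al be p12 p21 u).
Proof.
  intros B. unfold Bd in *.
  assert (e1 : 0 <= be * (1 - p21)) by nra.
  assert (e2 : 0 <= be * p21) by nra.
  assert (e3 : 0 <= al * (1 - p12)) by nra.
  assert (e4 : 0 <= al * p12) by nra.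
  intros [|a] [|b]; simpl Kop; rewrite ?S_INR; simpl INR.
  - apply B.
  - pose proof (B 0%nat b). pose proof (B 0%nat (S b)). rewrite S_INR in *. simpl INR in *. nra.
  - pose proof (B a 0%nat). pose proof (B (S a) 0%nat). rewrite S_INR in *. simpl INR in *. nra.
  - pose proof (B a (S b)). pose proof (B (S a) b). rewrite !S_INR in *.
    pose proof (pos_INR a). pose proof (pos_INR b). nra.
Qed.

End K.

Definition uK al be p12 p21 k (f : state -> R) := Nat.iter k (Kop al be p12 p21) f.

Lemma uK_S al be p12 p21 k f : uK al be p12 p21 (S k) f = Kop al be p12 p21 (uK al be p12 p21 k f).
Proof. reflexivity. Qed.

Definition f1 : state -> R := fun x => INR (fst x).
Definition f2 : state -> R := fun x => INR (snd x).

Lemma Inv_f1 : Inv f1.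
Proof.
  unfold Inv, Dd, f1; cbn [fst]; repeat split; intros; rewrite ?S_INR; simpl INR; lra.
Qed.

Lemma Bd_f1 : Bd f1.
Proof. unfold Bd, f1; simpl; intros; pose proof (pos_INR a); pose proof (pos_INR b); lra. Qed.

Lemma Bd_f2 : Bd f2.
Proof. unfold Bd, f2; simpl; intros; pose proof (pos_INR a); pose proof (pos_INR b); lra. Qed.

Lemma uK_props al be p12 p21 k :
  0 <= al -> 0 <= be -> al + be = 1 -> 0 <= p12 <= 1 -> 0 <= p21 <= 1 ->
  Inv (uK al be p12 p21 k f1) /\ Bd (uK al be p12 p21 k f1) /\ Bd (uK al be p12 p21 k f2).
Proof.
  intros. induction k as [|k IH].
  - split; [apply Inv_f1|split; [apply Bd_f1|apply Bd_f2]].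
  - rewrite !uK_S. destruct IH as [A [B C]].
    split; [apply Inv_K|split; apply Bd_K]; auto.
Qed.

Lemma Kop_swap al be p12 p21 v x :
  Kop al be p12 p21 (fun y => v (snd y, fst y)) x = Kop be al p21 p12 v (snd x, fst x).
Proof. destruct x as [[|a] [|b]]; simpl; ring. Qed.

Lemma uK_swap al be p12 p21 k x :
  uK al be p12 p21 k f2 x = uK be al p21 p12 k f1 (snd x, fst x).
Proof.
  revert x. induction k as [|k IH]; intros x.
  - reflexivity.
  - rewrite !uK_S.
    rewrite (Kop_ext _ _ _ _ _ (fun y => uK be al p21 p12 k f1 (snd y, fst y))) by auto.
    apply Kop_swap.
Qed.

Lemma series_nonneg d l : is_series d l -> (forall n, 0 <= d n) -> 0 <= l.
Proof.
  intros H Hd. apply is_series_Reals in H.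
  destruct (Rle_or_lt 0 l) as [h|h]; auto. exfalso.
  destruct (H (- l)) as [N HN]; [lra|].
  specialize (HN N (le_n _)). pose proof (cond_pos_sum d N Hd).
  unfold Rdist in HN. apply Rabs_def2 in HN. lra.
Qed.

Lemma seq_lim_series a : ex_series a -> seq_lim (fun n => sum_f_R0 a n) = Series a.
Proof.
  intros He. pose proof (Series_correct a He) as H.
  apply is_series_Reals in H.
  unfold seq_lim. apply (UL_sequence (fun n => sum_f_R0 a n)); auto.
  apply epsilon_spec. exists (Series a). exact H.
Qed.

Lemma exp_series z : is_series (fun n => z ^ n / INR (fact n)) (exp z).
Proof.
  eapply is_series_ext; [|apply (is_exp_Reals z)].
  intros n. simpl. rewrite pow_n_pow. unfold scal; simpl. unfold mult; simpl. unfold Rdiv. ring.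
Qed.

Lemma sum_series (g : nat -> nat -> R) (l : nat -> R) n :
  (forall i, (i <= n)%nat -> is_series (g i) (l i)) ->
  is_series (fun k => sum_f_R0 (fun i => g i k) n) (sum_f_R0 l n).
Proof.
  induction n as [|n IH]; intros H.
  - simpl. apply H. lia.
  - simpl. apply (is_series_plus (fun k => sum_f_R0 (fun i => g i k) n) (g (S n))).
    + apply IH. intros; apply H; lia.
    + apply H; lia.
Qed.

Lemma box_series Q1 Q2 (g : state -> nat -> R) (l : state -> R) :
  (forall a b, (a <= Q1)%nat -> (b <= Q2)%nat -> is_series (g (a,b)) (l (a,b))) ->
  is_series (fun k => box_sum Q1 Q2 (fun y => g y k)) (box_sum Q1 Q2 l).
Proof.
  intros H. unfold box_sum.
  apply (sum_series (fun a k => sum_f_R0 (fun b => g (a, b) k) Q2)).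
  intros a Ha. apply (sum_series (fun b k => g (a, b) k)). intros b Hb. auto.
Qed.

Section Ser.
Variables l1 l2 p12 p21 : R.
Hypotheses (hl1 : 0 < l1) (hl2 : 0 < l2) (hp12 : 0 <= p12 <= 1) (hp21 : 0 <= p21 <= 1).
Let L := l1 + l2.
Let al := l1 / L.
Let be := l2 / L.
Let KK := Kop al be p12 p21.
Let GG := Gop l1 l2 p12 p21.

Lemma Gop_K v x : GG v x = L * (KK v x - v x).
Proof.
  unfold GG, KK, al, be, L. assert (l1 + l2 <> 0) by lra.
  destruct x as [[|a] [|b]]; simpl; field; auto.
Qed.

Lemma Gop_ext v w x : (forall y, v y = w y) -> GG v x = GG w x.
Proof. intros H. unfold GG. destruct x as [[|a] [|b]]; simpl; rewrite ?H; reflexivity. Qed.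

Lemma itG_S n : forall v x, itG l1 l2 p12 p21 (S n) v x = GG (itG l1 l2 p12 p21 n v) x.
Proof.
  induction n as [|n IH]; intros v x.
  - reflexivity.
  - change (itG l1 l2 p12 p21 (S (S n)) v x) with (itG l1 l2 p12 p21 (S n) (GG v) x).
    rewrite IH. apply Gop_ext. intros y. reflexivity.
Qed.

Lemma Kop_add A B x : KK (fun y => A y + B y) x = KK A x + KK B x.
Proof. unfold KK. destruct x as [[|a] [|b]]; simpl; ring. Qed.

Lemma Kop_scal c A x : KK (fun y => c * A y) x = c * KK A x.
Proof. unfold KK. destruct x as [[|a] [|b]]; simpl; ring. Qed.

Lemma Kop_sum (c : nat -> R) (g : nat -> state -> R) n x :
  KK (fun y => sum_f_R0 (fun k => c k * g k y) n) x = sum_f_R0 (fun k => c k * KK (g k) x) n.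
Proof.
  induction n as [|n IH].
  - simpl. apply Kop_scal.
  - etransitivity; [apply (Kop_add (fun y => sum_f_R0 (fun k => c k * g k y) n)
                                   (fun y => c (S n) * g (S n) y))|].
    rewrite IH, Kop_scal. reflexivity.
Qed.

Variable f : state -> R.
Let s k x := uK al be p12 p21 k f x.

Definition cc n k := L ^ k / INR (fact k) * ((- L) ^ (n - k) / INR (fact (n - k))).
Definition ww n x := sum_f_R0 (fun k => cc n k * s k x) n.

Lemma T1 n k : (k <= n)%nat -> INR (S n - k) * cc (S n) k = - L * cc n k.
Proof.
  intros Hk. unfold cc. replace (S n - k)%nat with (S (n - k)) by lia.
  rewrite fact_simpl, mult_INR. simpl pow.
  pose proof (INR_fact_neq_0 (n - k)). pose proof (INR_fact_neq_0 k).
  assert (INR (S (n - k)) <> 0) by (apply not_0_INR; lia).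
  field. auto.
Qed.

Lemma T2 n j : INR (S j) * cc (S n) (S j) = L * cc n j.
Proof.
  unfold cc. cbn [Nat.sub]. rewrite fact_simpl, mult_INR. simpl pow.
  pose proof (INR_fact_neq_0 (n - j)). pose proof (INR_fact_neq_0 j).
  assert (INR (S j) <> 0) by (apply not_0_INR; lia).
  field. auto.
Qed.

Lemma w_rec n x : INR (S n) * ww (S n) x =
  L * sum_f_R0 (fun k => cc n k * s (S k) x) n - L * ww n x.
Proof.
  unfold ww. rewrite <- sum_scal_l.
  rewrite (sum_eq _ (fun k => INR (S n - k) * cc (S n) k * s k x + INR k * cc (S n) k * s k x)).
  2:{ intros k Hk. replace (INR (S n)) with (INR (S n - k) + INR k).
      - ring.
      - rewrite <- plus_INR. f_equal. lia. }
  rewrite sum_plus.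
  assert (E1 : sum_f_R0 (fun k => INR (S n - k) * cc (S n) k * s k x) (S n) = - L * sum_f_R0 (fun k => cc n k * s k x) n).
  { rewrite tech5. rewrite Nat.sub_diag. change (INR 0) with 0. rewrite Rmult_0_l, Rmult_0_l, Rplus_0_r.
    rewrite <- sum_scal_l. apply sum_eq. intros k Hk. cbv beta. rewrite T1 by auto. ring. }
  assert (E2 : sum_f_R0 (fun k => INR k * cc (S n) k * s k x) (S n) = L * sum_f_R0 (fun k => cc n k * s (S k) x) n).
  { rewrite decomp_sum by lia. simpl pred. change (INR 0) with 0. rewrite Rmult_0_l, Rmult_0_l, Rplus_0_l.
    rewrite <- sum_scal_l. apply sum_eq. intros j Hj. cbv beta. rewrite T2. ring. }
  rewrite E1, E2. ring.
Qed.

Lemma itG_w n : forall x, itG l1 l2 p12 p21 n f x = INR (fact n) * ww n x.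
Proof.
  induction n as [|n IH]; intros x.
  - unfold ww, cc. simpl. unfold s, uK. simpl. field.
  - rewrite itG_S. rewrite (Gop_ext _ (fun y => INR (fact n) * ww n y)) by apply IH.
    rewrite Gop_K, Kop_scal.
    rewrite fact_simpl, mult_INR.
    replace (INR (S n) * INR (fact n) * ww (S n) x) with (INR (fact n) * (INR (S n) * ww (S n) x)) by ring.
    rewrite w_rec.
    unfold ww at 1. unfold s. rewrite Kop_sum. fold KK.
    replace (sum_f_R0 (fun k => cc n k * KK (fun y => uK al be p12 p21 k f y) x) n)
      with (sum_f_R0 (fun k => cc n k * uK al be p12 p21 (S k) f x) n) by reflexivity.
    ring.
Qed.

End Ser.

Lemma coef_nonneg z k : 0 <= z -> 0 <= z ^ k / INR (fact k).
Proof.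
  intros. unfold Rdiv. apply Rmult_le_pos; [apply pow_le; auto|].
  left; apply Rinv_0_lt_compat, INR_fact_lt_0.
Qed.

Lemma ex_exp_scal z C : ex_series (fun k => z ^ k / INR (fact k) * C).
Proof. exists (exp z * C). apply is_series_scal_r, exp_series. Qed.

Lemma ex_by_bound (a : nat -> R) z C : 0 <= z ->
  (forall k, Rabs (a k) <= C) ->
  ex_series (fun k => Rabs (z ^ k / INR (fact k) * a k)).
Proof.
  intros hz H.
  apply (@ex_series_le R_AbsRing R_CompleteNormedModule _ (fun k => z ^ k / INR (fact k) * C)); [|apply ex_exp_scal].
  intros k. change (norm ?x) with (Rabs x). rewrite Rabs_Rabsolu, Rabs_mult.
  rewrite (Rabs_right (z ^ k / INR (fact k))) by (apply Rle_ge, coef_nonneg; auto).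
  apply Rmult_le_compat_l; [apply coef_nonneg; auto|auto].
Qed.

Section Main.
Variables l1 l2 p12 p21 T : R.
Hypotheses (hl1 : 0 < l1) (hl2 : 0 < l2) (hp12 : 0 <= p12 <= 1) (hp21 : 0 <= p21 <= 1)
  (hT : 0 < T).
Let L := l1 + l2.
Let al := l1 / L.
Let be := l2 / L.

Definition Ser (f : state -> R) x :=
  Series (fun k => (L * T) ^ k / INR (fact k) * uK al be p12 p21 k f x).

Lemma main_series f x C : (forall k, Rabs (uK al be p12 p21 k f x) <= C) ->
  is_series (fun n => T ^ n / INR (fact n) * itG l1 l2 p12 p21 n f x)
            (exp (- (L * T)) * Ser f x).
Proof.
  intros HB.
  assert (hLT : 0 <= L * T) by (unfold L; nra).
  set (A := fun k => (L * T) ^ k / INR (fact k) * uK al be p12 p21 k f x).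
  set (B := fun j => (- (L * T)) ^ j / INR (fact j)).
  assert (exA : ex_series (fun k => Rabs (A k))) by (apply (ex_by_bound _ _ C); auto).
  assert (exB : ex_series (fun k => Rabs (B k))).
  { exists (exp (L * T)). eapply is_series_ext; [|apply exp_series].
    intros k. cbv beta. unfold B. symmetry. unfold Rdiv.
    rewrite Rabs_mult, <- RPow_abs, Rabs_Ropp, (Rabs_right (L * T)) by lra.
    rewrite (Rabs_right (/ INR (fact k))); [reflexivity|]. apply Rle_ge. left. apply Rinv_0_lt_compat, INR_fact_lt_0. }
  pose proof (is_series_mult A B (Series A) (exp (- (L * T)))
     (Series_correct _ (ex_series_Rabs _ exA)) (exp_series _) exA exB) as H.
  rewrite Rmult_comm. unfold Ser. fold A.
  eapply is_series_ext; [|exact H].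
  intros n. cbv beta. rewrite itG_w by auto. unfold ww, cc. fold L. fold al be.
  rewrite <- Rmult_assoc. replace (T ^ n / INR (fact n) * INR (fact n)) with (T ^ n) by (field; apply INR_fact_neq_0).
  rewrite <- sum_scal_l. apply sum_eq. intros k Hk. unfold A, B.
  replace (T ^ n) with (T ^ k * T ^ (n - k)) by (rewrite <- pow_add; f_equal; lia).
  replace (- (L * T)) with ((- L) * T) by ring.
  rewrite !Rpow_mult_distr. field. split; apply INR_fact_neq_0.
Qed.

Variables Q1 Q2 : nat.

Definition Ebox (v : state -> R) :=
  box_sum Q1 Q2 (fun y => trans_prob l1 l2 p12 p21 Q1 Q2 T (Q1, Q2) y * v y).

Lemma Ebox_series v :
  is_series (fun k => T ^ k / INR (fact k) * itG l1 l2 p12 p21 k v (Q1, Q2)) (Ebox v).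
Proof.
  unfold Ebox.
  eapply is_series_ext; [|apply (box_series Q1 Q2
     (fun y k => T ^ k / INR (fact k) * (gen_pow l1 l2 p12 p21 Q1 Q2 k (Q1, Q2) y * v y)))].
  - intros k. cbv beta. rewrite box_sum_scal. f_equal. apply gp_itG; lia.
  - intros a b Ha Hb.
    set (g := fun k => T ^ k / INR (fact k) * gen_pow l1 l2 p12 p21 Q1 Q2 k (Q1, Q2) (a, b)).
    assert (exg : ex_series g).
    { apply ex_series_Rabs.
      set (B0 := INR (S Q1) * (INR (S Q2) * (l1 + l2))).
      assert (HB0 : 0 <= B0).
      { unfold B0. apply Rmult_le_pos; [apply pos_INR|]. apply Rmult_le_pos; [apply pos_INR|lra]. }
      apply (@ex_series_le R_AbsRing R_CompleteNormedModule _ (fun k => (T * B0) ^ k / INR (fact k) * 1)); [|apply ex_exp_scal].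
      intros k. change (norm ?x) with (Rabs x). rewrite Rabs_Rabsolu. unfold g.
      rewrite Rabs_mult, (Rabs_right (T ^ k / INR (fact k))) by (apply Rle_ge, coef_nonneg; lra).
      rewrite Rpow_mult_distr, Rmult_1_r.
      replace (T ^ k * B0 ^ k / INR (fact k)) with (T ^ k / INR (fact k) * B0 ^ k) by (field; apply INR_fact_neq_0).
      apply Rmult_le_compat_l; [apply coef_nonneg; lra|]. apply gp_bound; auto. }
    assert (Htp : trans_prob l1 l2 p12 p21 Q1 Q2 T (Q1, Q2) (a, b) = Series g) by (unfold trans_prob; apply (seq_lim_series g exg)). cbv beta. rewrite Htp.
    eapply is_series_ext; [|apply (is_series_scal_r (v (a, b)) g _ (Series_correct _ exg))].
    intros k. unfold g. cbv beta. apply Rmult_assoc.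
Qed.

Lemma E_formula f C : (forall k, Rabs (uK al be p12 p21 k f (Q1, Q2)) <= C) ->
  Ebox f = exp (- (L * T)) * Ser f (Q1, Q2).
Proof.
  intros HB. rewrite <- (is_series_unique _ _ (Ebox_series f)).
  apply is_series_unique. apply (main_series f (Q1, Q2) C HB).
Qed.

End Main.

Lemma series4 (a b c d : nat -> R) la lb lc ld :
  is_series a la -> is_series b lb -> is_series c lc -> is_series d ld ->
  (forall k, 0 <= a k - b k - c k + d k) -> 0 <= la - lb - lc + ld.
Proof.
  intros Ha Hb Hc Hd H.
  apply (series_nonneg (fun k => a k - b k - c k + d k)); auto.
  exact (is_series_plus _ _ _ _ (is_series_minus _ _ _ _ (is_series_minus _ _ _ _ Ha Hb) Hc) Hd).
Qed.

Lemma Ser_delta l1 l2 p12 p21 T f Q1 Q2 :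
  0 < l1 -> 0 < l2 -> 0 < T ->
  (forall k a b, Rabs (uK (l1 / (l1 + l2)) (l2 / (l1 + l2)) p12 p21 k f (a, b)) <= INR a + INR b) ->
  (forall k, 0 <= uK (l1 / (l1 + l2)) (l2 / (l1 + l2)) p12 p21 k f (S Q1, S Q2)
              - uK (l1 / (l1 + l2)) (l2 / (l1 + l2)) p12 p21 k f (S Q1, Q2)
              - uK (l1 / (l1 + l2)) (l2 / (l1 + l2)) p12 p21 k f (Q1, S Q2)
              + uK (l1 / (l1 + l2)) (l2 / (l1 + l2)) p12 p21 k f (Q1, Q2)) ->
  0 <= Ser l1 l2 p12 p21 T f (S Q1, S Q2) - Ser l1 l2 p12 p21 T f (S Q1, Q2)
       - Ser l1 l2 p12 p21 T f (Q1, S Q2) + Ser l1 l2 p12 p21 T f (Q1, Q2).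
Proof.
  intros h1 h2 hT HB HD.
  assert (hLT : 0 <= (l1 + l2) * T) by nra.
  assert (EX : forall x, ex_series (fun k => ((l1 + l2) * T) ^ k / INR (fact k) *
      uK (l1 / (l1 + l2)) (l2 / (l1 + l2)) p12 p21 k f x)).
  { intros [a b]. apply ex_series_Rabs. apply (ex_by_bound _ _ (INR a + INR b)); auto. }
  unfold Ser.
  apply series4 with
    (a := fun k => ((l1 + l2) * T) ^ k / INR (fact k) * uK (l1 / (l1 + l2)) (l2 / (l1 + l2)) p12 p21 k f (S Q1, S Q2))
    (b := fun k => ((l1 + l2) * T) ^ k / INR (fact k) * uK (l1 / (l1 + l2)) (l2 / (l1 + l2)) p12 p21 k f (S Q1, Q2))
    (c := fun k => ((l1 + l2) * T) ^ k / INR (fact k) * uK (l1 / (l1 + l2)) (l2 / (l1 + l2)) p12 p21 k f (Q1, S Q2))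
    (d := fun k => ((l1 + l2) * T) ^ k / INR (fact k) * uK (l1 / (l1 + l2)) (l2 / (l1 + l2)) p12 p21 k f (Q1, Q2));
    try apply Series_correct; try apply EX.
  intros k. cbv beta.
  pose proof (coef_nonneg _ k hLT). pose proof (HD k). nra.
Qed.

Theorem theorem2 (T l1 l2 p12 p21 r1 r2 c1 c2 h1 h2 : R)
  (hT : 0 < T) (hl1 : 0 < l1) (hl2 : 0 < l2)
  (hp12 : 0 <= p12 <= 1) (hp21 : 0 <= p21 <= 1)
  (hr1 : 0 <= r1) (hr2 : 0 <= r2) (hh1 : 0 <= h1) (hh2 : 0 <= h2) :
  forall Q1 Q2 : nat,
    pi1 T l1 l2 p12 p21 r1 r2 c1 c2 h1 h2 (S Q1) (S Q2)
    - pi1 T l1 l2 p12 p21 r1 r2 c1 c2 h1 h2 (S Q1) Q2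
    - pi1 T l1 l2 p12 p21 r1 r2 c1 c2 h1 h2 Q1 (S Q2)
    + pi1 T l1 l2 p12 p21 r1 r2 c1 c2 h1 h2 Q1 Q2 <= 0.
Proof.
  intros Q1 Q2.
  set (al := l1 / (l1 + l2)). set (be := l2 / (l1 + l2)).
  assert (hal : 0 <= al) by (unfold al; apply Rdiv_le_0_compat; lra).
  assert (hbe : 0 <= be) by (unfold be; apply Rdiv_le_0_compat; lra).
  assert (hab : al + be = 1) by (unfold al, be; field; lra).
  assert (hba : be + al = 1) by lra.
  assert (B1 : forall k a b, Rabs (uK al be p12 p21 k f1 (a, b)) <= INR a + INR b).
  { intros k a b. destruct (uK_props al be p12 p21 k hal hbe hab hp12 hp21) as [_ [B _]].
    specialize (B a b). rewrite Rabs_right by lra. lra. }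
  assert (B2 : forall k a b, Rabs (uK al be p12 p21 k f2 (a, b)) <= INR a + INR b).
  { intros k a b. destruct (uK_props al be p12 p21 k hal hbe hab hp12 hp21) as [_ [_ B]].
    specialize (B a b). rewrite Rabs_right by lra. lra. }
  assert (E1 : forall a b, E_n1 l1 l2 p12 p21 a b T = exp (- ((l1 + l2) * T)) * Ser l1 l2 p12 p21 T f1 (a, b)).
  { intros a b. apply (E_formula l1 l2 p12 p21 T hl1 hl2 hp12 hp21 hT a b f1 (INR a + INR b)).
    intros k. apply B1. }
  assert (E2 : forall a b, E_n2 l1 l2 p12 p21 a b T = exp (- ((l1 + l2) * T)) * Ser l1 l2 p12 p21 T f2 (a, b)).
  { intros a b. apply (E_formula l1 l2 p12 p21 T hl1 hl2 hp12 hp21 hT a b f2 (INR a + INR b)).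
    intros k. apply B2. }
  assert (D1 : 0 <= Ser l1 l2 p12 p21 T f1 (S Q1, S Q2) - Ser l1 l2 p12 p21 T f1 (S Q1, Q2)
       - Ser l1 l2 p12 p21 T f1 (Q1, S Q2) + Ser l1 l2 p12 p21 T f1 (Q1, Q2)).
  { apply Ser_delta; auto. intros k.
    destruct (uK_props al be p12 p21 k hal hbe hab hp12 hp21) as [[_ [_ [I2 _]]] _].
    specialize (I2 Q1 Q2). unfold Dd in I2. fold al be. lra. }
  assert (D2 : 0 <= Ser l1 l2 p12 p21 T f2 (S Q1, S Q2) - Ser l1 l2 p12 p21 T f2 (S Q1, Q2)
       - Ser l1 l2 p12 p21 T f2 (Q1, S Q2) + Ser l1 l2 p12 p21 T f2 (Q1, Q2)).
  { apply Ser_delta; auto. intros k. fold al be. rewrite !uK_swap. cbn [fst snd].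
    destruct (uK_props be al p21 p12 k hbe hal hba hp21 hp12) as [[_ [_ [I2 _]]] _].
    specialize (I2 Q2 Q1). unfold Dd in I2. lra. }
  unfold pi1. rewrite !E1, !E2.
  set (e := exp (- ((l1 + l2) * T))).
  assert (he : 0 < e) by apply exp_pos.
  assert (hiT : 0 < / T) by (apply Rinv_0_lt_compat; auto).
  set (X := Ser l1 l2 p12 p21 T f1 (S Q1, S Q2) - Ser l1 l2 p12 p21 T f1 (S Q1, Q2)
       - Ser l1 l2 p12 p21 T f1 (Q1, S Q2) + Ser l1 l2 p12 p21 T f1 (Q1, Q2)) in D1.
  set (Y := Ser l1 l2 p12 p21 T f2 (S Q1, S Q2) - Ser l1 l2 p12 p21 T f2 (S Q1, Q2)
       - Ser l1 l2 p12 p21 T f2 (Q1, S Q2) + Ser l1 l2 p12 p21 T f2 (Q1, Q2)) in D2.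
  assert (P : 0 <= / T * e * ((r1 + h1) * X + (r2 + h2) * Y)).
  { apply Rmult_le_pos; [nra|]. nra. }
  match goal with |- ?G <= 0 => replace G with (- (/ T * e * ((r1 + h1) * X + (r2 + h2) * Y))) end.
  - lra.
  - unfold X, Y. ring.
Qed.
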